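(* Let $W_T=S_{N+1}$ be the symmetric group with simple reflections $s_1,\dots,s_N$ indexed by $T=\{1<2<\dots<N\}$, let $I=\{1,\dots,N-1\}$, $J=\{2,\dots,N\}$, and for $X\subset T$ with $X=\{x_1>x_2>\dots>x_d\}$ let $h_X=s_{x_1}s_{x_2}\cdots s_{x_d}$. For any subset $X\subset T$ the following are equivalent: (i) $J\subset X$; (ii) $J\subset\mathcal R(w_Ih_X)$. Moreover, in this case: (1) $\ell(w_Ih_X)=\ell(w_I)+\ell(h_X)$; (2) $w_Ih_X=h_Yw_J$ for some uniquely determined $Y\subset T$; (3) $Y$ is the conjugation of $X$ by the longest element of $W_T$; (4) $\mathcal R(w_Ih_X)=X$; (5) $\mathcal L(h_Yw_J)=Y$.
   Context: For $K\subset T$, $w_K$ is the longest element of the parabolic subgroup $W_K$. $\mathcal L(w)$ and $\mathcal R(w)$ denote the left and right descent sets of $w$ (sets of simple reflections, identified with their indices). Conjugation by the longest element $w_T$ sends $s_i$ to $s_{N+1-i}$. *)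

(* Defs.v *)
(* W_T = S_{N+1} realized as {perm 'I_N.+1}.
   Simple reflections are indexed by k : 'I_N, where k stands for
   s_{k+1} (paper's index), i.e. the transposition of k and k+1. *)
From mathcomp Require Import all_boot all_order all_fingroup.
Set Implicit Arguments. Unset Strict Implicit. Unset Printing Implicit Defensive.
Local Open Scope group_scope.

Section Coxeter.
Variable N : nat.
Notation W := {perm 'I_N.+1}.

Definition sref (k : 'I_N) : W := tperm (widen_ord (leqnSn N) k) (lift ord0 k).

Definition word_of_len (w : W) (n : nat) : bool :=
  [exists t : n.-tuple 'I_N, (\prod_(i <- t) sref i) == w].

(* Coxeter length: the least n such that w is a product of n simple
   reflections (the search bound #|W| exceeds the maximal length). *)
Definition len (w : W) : nat :=
  find (word_of_len w) (iota 0 #|{: W}|.+1).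

Definition parab (K : {set 'I_N}) : {group W} := <<[set sref k | k in K]>>%G.
Definition wlong (K : {set 'I_N}) : W :=
  [arg max_(w > (1 : W) in parab K) len w].

Definition rdes (w : W) : {set 'I_N} := [set k | len (w * sref k) < len w].
Definition ldes (w : W) : {set 'I_N} := [set k | len (sref k * w) < len w].

Definition hX (X : {set 'I_N}) : W :=
  \prod_(x <- sort (fun a b : 'I_N => b <= a)%N (enum X)) sref x.

(* T = all indices, I = {1..N-1}, J = {2..N} (paper indexing) *)
Definition Tset : {set 'I_N} := [set: 'I_N].
Definition Iset : {set 'I_N} := [set k : 'I_N | k.+1 < N]%N.
Definition Jset : {set 'I_N} := [set k : 'I_N | 0 < k]%N.

Definition conjT (X : {set 'I_N}) : {set 'I_N} :=
  [set k | [exists x in X, sref k == sref x ^ wlong Tset]].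
End Coxeter.

(* Main.v *)
Require Import Defs.
From mathcomp Require Import all_boot all_order all_fingroup.
From mathcomp Require Import zify.
Set Implicit Arguments. Unset Strict Implicit. Unset Printing Implicit Defensive.
Local Open Scope group_scope.

Section Aux.
Variable N : nat.
Notation W := {perm 'I_N.+1}.
Notation sref := (@sref N).

Lemma srefE (k : 'I_N) (x : 'I_N.+1) :
  val (sref k x) = if val x == val k then (val k).+1
                   else if val x == (val k).+1 then val k else val x.
Proof.
rewrite /sref; case: tpermP => [->|->|].
- by rewrite /= eqxx.
- by rewrite /= eqxx; case: eqP => //= H; lia.
- move=> H1 H2.
  have H1' : val x != val k by apply/eqP => E; apply: H1; apply: val_inj.
  have H2' : val x != (val k).+1 by apply/eqP => E; apply: H2; apply: val_inj.
  by rewrite (negbTE H1') (negbTE H2').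
Qed.

Definition Inv (w : W) : {set 'I_N.+1 * 'I_N.+1} :=
  [set p : 'I_N.+1 * 'I_N.+1 | (p.1 < p.2)%N && (w p.2 < w p.1)%N].
Definition inv (w : W) := #|Inv w|.

Definition sa (k : 'I_N) : 'I_N.+1 := widen_ord (leqnSn N) k.
Definition sb (k : 'I_N) : 'I_N.+1 := lift ord0 k.
Lemma sa_val k : val (sa k) = val k. Proof. by []. Qed.
Lemma sb_val k : val (sb k) = (val k).+1. Proof. by []. Qed.

Lemma swap_nat (i j k : nat) :
  let s x := if x == k then k.+1 else if x == k.+1 then k else x in
  ((i < j) && ~~ ((i == k) && (j == k.+1)))
  = ((s i < s j) && ~~ ((i == k.+1) && (j == k))).
Proof.
move=> s; rewrite /s.
case: (i =P k) => [->|Hi]; case: (j =P k) => [->|Hj];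
  rewrite ?eqxx //=; try (case: (j =P k.+1) => Hj'); try (case: (i =P k.+1) => Hi');
  try (case: (j =P k.+1) => Hj''); rewrite /=; lia.
Qed.


Lemma sref_sa k : sref k (sa k) = sb k. Proof. by rewrite /sref /sa /sb tpermL. Qed.
Lemma sref_sb k : sref k (sb k) = sa k. Proof. by rewrite /sref /sa /sb tpermR. Qed.
Lemma sref_inj k : injective (sref k). Proof. exact: perm_inj. Qed.

Lemma swap_nat2 (i j k : nat) :
  ~~ ((i == k) && (j == k.+1)) && (i < j) =
  ~~ (((if i == k then k.+1 else if i == k.+1 then k else i) == k) &&
      ((if j == k then k.+1 else if j == k.+1 then k else j) == k.+1)) &&
  ((if i == k then k.+1 else if i == k.+1 then k else i) <
   (if j == k then k.+1 else if j == k.+1 then k else j)).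
Proof.
case: (i =P k) => Hi; case: (j =P k) => Hj; case: (i =P k.+1) => Hi'; case: (j =P k.+1) => Hj';
 rewrite /= ?eqxx; try lia;
 repeat match goal with |- context [?a == ?b] => case: (a =P b) => ? end; rewrite /=; lia.
Qed.

Lemma inv_sw k (w : W) :
  inv (sref k * w) = if (w (sa k) < w (sb k))%N then (inv w).+1 else (inv w).-1.
Proof.
set e := (sa k, sb k).
have Hset : Inv (sref k * w) :\ e =
   (fun p => (sref k p.1, sref k p.2)) @^-1: (Inv w :\ e).
  apply/setP => [[i j]]; rewrite !inE /= !permM.
  rewrite /e !xpair_eqE -!val_eqE /= !srefE.
  case: (w _ < w _)%N; rewrite ?andbF ?andbT //.
  rewrite /bump leq0n add1n.
  exact: swap_nat2.
have Hinj : injective (fun p : 'I_N.+1 * 'I_N.+1 => (sref k p.1, sref k p.2)).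
  by move=> [a b] [c d] /= [/perm_inj -> /perm_inj ->].
rewrite /inv (cardsD1 e (Inv (sref k * w))) (cardsD1 e (Inv w)) Hset card_preimset //.
rewrite !inE /= !permM sref_sa sref_sb.
have Hab : (sa k < sb k)%N by rewrite sa_val sb_val.
rewrite Hab /=.
have Hne : nat_of_ord (w (sa k)) != nat_of_ord (w (sb k)).
  change (val (w (sa k)) != val (w (sb k))); rewrite val_eqE; apply/eqP => /perm_inj/(congr1 val). rewrite /= /bump leq0n add1n. lia.
case: ifP => H.
  have -> : (w (sb k) < w (sa k)) = false by move: H; lia.
  by rewrite add0n add1n.
- have -> : (w (sb k) < w (sa k)) = true by move: H Hne; lia.
  by rewrite add0n add1n.
Qed.


Lemma sref2 k : sref k * sref k = 1.
Proof. by rewrite /sref tperm2. Qed.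
Lemma srefV k : (sref k)^-1 = sref k.
Proof. by rewrite /sref tpermV. Qed.

Lemma inv1 : inv 1 = 0.
Proof.
apply/eqP; rewrite cards_eq0; apply/eqP/setP => p; rewrite !inE !perm1.
by apply/negbTE/negP => /andP[]; lia.
Qed.

Lemma inv_le_invV (v : W) : inv v <= inv v^-1.
Proof.
have Hinj : injective (fun p : 'I_N.+1 * 'I_N.+1 => (v p.2, v p.1)).
  by move=> [a b] [c d] /= [/perm_inj -> /perm_inj ->].
rewrite /inv -(card_imset _ Hinj); apply: subset_leq_card.
apply/subsetP => q /imsetP[p]; rewrite !inE => /andP[H1 H2] -> /=.
by rewrite !permK H2 H1.
Qed.

Lemma invV (w : W) : inv w^-1 = inv w.
Proof.
by apply/eqP; rewrite eqn_leq; apply/andP; split;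
  [rewrite -{2}(invgK w) |]; apply: inv_le_invV.
Qed.

Lemma desc_inv k (w : W) : ~~ (w (sa k) < w (sb k))%N ->
  inv w = (inv (sref k * w)).+1.
Proof.
move=> H.
have := inv_sw k (sref k * w).
rewrite mulgA sref2 mul1g !permM sref_sa sref_sb.
have Hne : nat_of_ord (w (sa k)) != nat_of_ord (w (sb k)).
  change (val (w (sa k)) != val (w (sb k))); rewrite val_eqE.
  apply/eqP => /perm_inj/(congr1 val). rewrite /= /bump leq0n add1n. lia.
have -> : (w (sb k) < w (sa k))%N = true by move: H Hne; lia.
by [].
Qed.

Lemma inv_sw_lt k (v : W) : (inv (sref k * v) < inv v)%N = (v (sb k) < v (sa k))%N.
Proof.
case: (boolP (v (sa k) < v (sb k))%N) => H.
- rewrite inv_sw H.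
  have -> : (v (sb k) < v (sa k))%N = false by move: H; lia.
  lia.
- rewrite (desc_inv H) ltnSn.
  have Hne : nat_of_ord (v (sa k)) != nat_of_ord (v (sb k)).
    change (val (v (sa k)) != val (v (sb k))); rewrite val_eqE.
    apply/eqP => /perm_inj/(congr1 val). rewrite /= /bump leq0n add1n. lia.
  by move: H Hne; lia.
Qed.

Lemma inv_ws_lt k (w : W) : (inv (w * sref k) < inv w)%N = (w^-1 (sb k) < w^-1 (sa k))%N.
Proof.
by rewrite -invV invMg srefV -(invV w) inv_sw_lt.
Qed.

Lemma inv_ws k (w : W) : inv (w * sref k) =
  if (w^-1 (sa k) < w^-1 (sb k))%N then (inv w).+1 else (inv w).-1.
Proof. by rewrite -invV invMg srefV inv_sw invV. Qed.

Lemma inc_nat (g : nat -> nat) (a b : nat) :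
  (forall i, a <= i <= b -> a <= g i <= b) ->
  (forall i, a <= i < b -> g i < g i.+1) ->
  forall i, a <= i <= b -> g i = i.
Proof.
move=> Hr Hinc i Hi; have Hab : a <= b by lia.
have Lo : forall d, d <= b - a -> a + d <= g (a + d).
  elim=> [|d IH] Hd; first by have := Hr a; rewrite addn0; lia.
  have := IH (ltnW Hd); have := Hinc (a + d); rewrite addnS; lia.
have Up : forall d, d <= b - a -> g (b - d) <= b - d.
  elim=> [|d IH] Hd; first by have := Hr b; rewrite subn0; lia.
  have := IH (ltnW Hd); have := Hinc (b - d.+1).
  have -> : (b - d.+1).+1 = b - d by lia.
  lia.
have := Lo (i - a); have := Up (b - i).
have -> : a + (i - a) = i by lia.
have -> : b - (b - i) = i by lia.
lia.
Qed.

Lemma dec_nat (g : nat -> nat) (a b : nat) :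
  (forall i, a <= i <= b -> a <= g i <= b) ->
  (forall i, a <= i < b -> g i.+1 < g i) ->
  forall i, a <= i <= b -> g i = a + b - i.
Proof.
move=> Hr Hdec i Hi; have Hab : a <= b by lia.
have Lo : forall d, d <= b - a -> a + d <= g (b - d).
  elim=> [|d IH] Hd; first by have := Hr b; rewrite subn0; lia.
  have := IH (ltnW Hd); have := Hdec (b - d.+1).
  have -> : (b - d.+1).+1 = b - d by lia.
  lia.
have Up : forall d, d <= b - a -> g (a + d) <= b - d.
  elim=> [|d IH] Hd; first by have := Hr a; rewrite addn0; lia.
  have := IH (ltnW Hd); have := Hdec (a + d); rewrite addnS; lia.
have := Lo (b - i); have := Up (i - a).
have -> : a + (i - a) = i by lia.
have -> : b - (b - i) = i by lia.
lia.
Qed.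

Definition ordk (i : nat) (H : i < N) : 'I_N := Ordinal H.

Lemma noDesc (w : W) : (forall k : 'I_N, (w (sa k) < w (sb k))%N) -> w = 1.
Proof.
move=> H.
pose g i := nat_of_ord (w (inord i)).
have Hg : forall i, 0 <= i <= N -> g i = i.
  apply: inc_nat => i Hi; first by rewrite /g; have := ltn_ord (w (inord i)); lia.
  have Hi' : i < N by lia.
  have := H (Ordinal Hi'); rewrite /g.
  have -> : sa (Ordinal Hi') = inord i by apply: val_inj; rewrite /= inordK //; lia.
  have -> : sb (Ordinal Hi') = inord i.+1.
    by apply: val_inj; rewrite /= inordK /bump /=; lia.
  by [].
apply/permP => x; apply: val_inj; rewrite perm1 /=.
have := Hg x; rewrite /g inord_val; have := ltn_ord x; lia.
Qed.

Lemma desc_step (w : W) : w != 1 -> exists k, inv w = (inv (sref k * w)).+1.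
Proof.
move=> Hw.
case: (boolP [exists k, ~~ (w (sa k) < w (sb k))%N]) => [/existsP [k Hk]|/existsPn H].
  by exists k; apply: desc_inv.
exfalso; move/eqP: Hw; apply; apply: noDesc => k; by have := H k; rewrite negbK.
Qed.

Lemma word_exists (w : W) : word_of_len w (inv w).
Proof.
have : forall n (w : W), inv w = n -> word_of_len w n.
  elim=> [|n IH] v Hv.
  - have -> : v = 1.
      apply/eqP; apply/negPn/negP => /desc_step [k]; rewrite Hv; lia.
    by apply/existsP; exists [tuple]; rewrite big_nil.
  - have Hv1 : v != 1 by apply/eqP => E; move: Hv; rewrite E inv1.
    have [k Hk] := desc_step Hv1.
    have /existsP [t /eqP Ht] := IH (sref k * v) (eq_add_S _ _ (etrans (esym Hk) Hv)).
    apply/existsP; exists [tuple of k :: t]; rewrite big_cons Ht.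
    by rewrite mulgA sref2 mul1g.
by move/(_ _ w erefl).
Qed.

Lemma inv_prod (l : seq 'I_N) : inv (\prod_(i <- l) sref i) <= size l.
Proof.
elim: l => [|k l IH]; first by rewrite big_nil inv1.
by rewrite big_cons inv_sw /=; case: ifP => _; move: IH; set m := inv _; lia.
Qed.

Lemma word_inv (w : W) n : word_of_len w n -> inv w <= n.
Proof. by move=> /existsP[t /eqP <-]; rewrite -{2}(size_tuple t) inv_prod. Qed.

Lemma inv_bound (w : W) : inv w < #|{: W}|.
Proof.
have Hex : forall n (v : W), inv v = n -> forall i, i <= n -> exists u : W, inv u = i.
  elim=> [|n IH] v Hv i Hi; first by exists v; lia.
  case: (ltngtP i n.+1) => Hin; last by exists v; rewrite Hv.
  - have Hv1 : v != 1 by apply/eqP => E; move: Hv; rewrite E inv1.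
    have [k Hk] := desc_step Hv1.
    apply: (IH (sref k * v)); lia.
  - lia.
pose f (i : 'I_(inv w).+1) : W := odflt 1 [pick u | inv u == i].
have Hf : forall i, inv (f i) = i.
  move=> i; rewrite /f; case: pickP => [u /eqP //|H].
  have [u Hu] := Hex _ w erefl i (ltnSE (ltn_ord i)).
  by have := H u; rewrite Hu eqxx.
have Hinj : injective f by move=> i j E; apply: val_inj; rewrite /= -Hf E Hf.
by have := leq_card f Hinj; rewrite card_ord.
Qed.

Lemma lenE (w : W) : len w = inv w.
Proof.
rewrite /len.
have Hhas : has (word_of_len w) (iota 0 #|{: W}|.+1).
  apply/hasP; exists (inv w); last exact: word_exists.
  by rewrite mem_iota add0n; have := inv_bound w; lia.
have Hf := (has_find (word_of_len w) (iota 0 #|{: W}|.+1)); rewrite Hhas in Hf.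
rewrite size_iota in Hf; have := nth_find 0 Hhas; rewrite nth_iota // => Hw.
have H1 := word_inv Hw.
apply/eqP; rewrite eqn_leq H1 andbT leqNgt; apply/negP => Hlt.
have := before_find 0 Hlt.
rewrite nth_iota ?add0n ?word_exists //.
lia.
Qed.

Lemma ldesE (w : W) k : (k \in ldes w) = (w (sb k) < w (sa k))%N.
Proof. by rewrite inE !lenE inv_sw_lt. Qed.

Lemma rdesE (w : W) k : (k \in rdes w) = (w^-1 (sb k) < w^-1 (sa k))%N.
Proof. by rewrite inE !lenE inv_ws_lt. Qed.

Lemma len_ws k (w : W) : len (w * sref k) =
  if (w^-1 (sa k) < w^-1 (sb k))%N then (len w).+1 else (len w).-1.
Proof. by rewrite !lenE inv_ws. Qed.


Lemma srefN (k : 'I_N) (x : 'I_N.+1) :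
  nat_of_ord (sref k x) = if (x : nat) == k then k.+1
                   else if (x : nat) == k.+1 then (k : nat) else x.
Proof. exact: srefE. Qed.

Lemma sref_fix (k : 'I_N) (x : 'I_N.+1) :
  (x : nat) != k -> (x : nat) != k.+1 -> sref k x = x.
Proof. by move=> H1 H2; apply: ord_inj; rewrite srefN (negbTE H1) (negbTE H2). Qed.

Definition Pl (l : seq 'I_N) : W := \prod_(i <- l) sref i.
Definition geqo := (fun a b : 'I_N => b <= a)%N.
Definition Dl (l : seq 'I_N) := uniq l && sorted geqo l.
Notation mv l := (map (@nat_of_ord N) l).

Lemma Pcons y l x : Pl (y :: l) x = Pl l (sref y x).
Proof. by rewrite /Pl big_cons permM. Qed.

Lemma Pnil x : Pl [::] x = x.
Proof. by rewrite /Pl big_nil perm1. Qed.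

Lemma Dcons y l : Dl (y :: l) -> Dl l /\ (forall z, z \in mv l -> (z < y)%N).
Proof.
rewrite /Dl /= => /andP[/andP[Hy Hu] Hs]; split; first by rewrite Hu (path_sorted Hs).
have Htr : transitive geqo by move=> a b c; rewrite /geqo => H1 H2; exact: leq_trans H2 H1.
move=> z /mapP[z' Hz' ->].
have := order_path_min Htr Hs; move/allP/(_ z' Hz'); rewrite /geqo => Hle.
have Hne : z' != y by apply/eqP => E; move: Hy; rewrite -E Hz'.
have Hne' : (z' : nat) != y by [].
by move: Hle Hne'; lia.
Qed.

Lemma Pfix l (x : 'I_N.+1) : (forall z, z \in mv l -> (z.+1 < x)%N) -> Pl l x = x.
Proof.
elim: l => [|y l IH] H; first by rewrite Pnil.
rewrite Pcons sref_fix.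
- by apply: IH => z Hz; apply: H; rewrite /= inE Hz orbT.
- by have := H y; rewrite /= inE eqxx => /(_ isT); lia.
- by have := H y; rewrite /= inE eqxx => /(_ isT); lia.
Qed.

Lemma P_in l (x : 'I_N.+1) : Dl l -> (x : nat) \in mv l -> (Pl l x : nat) = x.+1.
Proof.
elim: l x => [|y l IH] x D //.
have [D' Hlt] := Dcons D.
rewrite Pcons /= inE => /orP[/eqP Hxy | Hx].
- rewrite Pfix.
  + by rewrite srefN Hxy eqxx.
  + by move=> z Hz; rewrite srefN Hxy eqxx; have := Hlt z Hz; lia.
- have := Hlt _ Hx => Hxy.
  rewrite sref_fix; first exact: IH.
  + by move: Hxy; lia.
  + by move: Hxy; lia.
Qed.

Lemma P_notin l (x : 'I_N.+1) : Dl l -> (x : nat) \notin mv l -> (Pl l x : nat) <= x.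
Proof.
elim: l x => [|y l IH] x D; first by rewrite Pnil.
have [D' Hlt] := Dcons D.
rewrite Pcons /= inE negb_or => /andP[Hxy Hx].
case: (boolP ((x : nat) == y.+1)) => Hx1.
- have Hsv : (sref y x : nat) = y by rewrite srefN (negbTE Hxy) Hx1.
  have Hyl : (sref y x : nat) \notin mv l.
    by rewrite Hsv; apply/negP => /Hlt; lia.
  have := IH _ D' Hyl; rewrite Hsv; move/eqP: Hx1; lia.
- by rewrite sref_fix //; apply: IH.
Qed.

Lemma P_run l (x : 'I_N.+1) m : Dl l -> (x : nat) \notin mv l -> (m <= x)%N ->
  (forall k, (m <= k < x)%N -> k \in mv l) -> (m = 0 \/ m.-1 \notin mv l) ->
  (Pl l x : nat) = m.
Proof.
elim: l x => [|y l IH] x D Hx Hm Hr Hm1.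
  rewrite Pnil; case: (ltngtP m x) => // Hmx; last by move: Hm Hmx; lia.
  by have := Hr x.-1; rewrite in_nil; move: Hmx; lia.
have [D' Hlt] := Dcons D.
move: Hx; rewrite /= inE negb_or => /andP[Hxy Hx].
rewrite Pcons.
case: (ltnP x y) => Hyx.
- rewrite sref_fix; [|by move: Hyx; lia|by move: Hyx; lia].
  apply: IH => //.
  + move=> k Hk; have := Hr k Hk; rewrite /= inE => /orP[/eqP E|//]; move: Hk Hyx; lia.
  + case: Hm1 => [->|H]; [by left|right]; move: H; rewrite /= inE negb_or => /andP[_ //].
- case: (ltnP m x) => Hmx.
  + have Hyv : (y : nat) = x.-1.
      have := Hr x.-1; rewrite /= inE.
      have Hk : (m <= x.-1 < x)%N by move: Hmx; lia.
      move=> /(_ Hk) /orP[/eqP E | Hin]; first by [].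
      by have := Hlt _ Hin; move: Hyx Hxy; lia.
    have Hsv : (sref y x : nat) = y.
      by rewrite srefN (negbTE Hxy); have -> : (x : nat) == y.+1 by move: Hyv Hmx; lia.
    apply: IH => //.
    * by rewrite Hsv; apply/negP => /Hlt; lia.
    * by rewrite Hsv; move: Hyv Hmx; lia.
    * move=> k Hk; have := Hr k; rewrite /= inE Hsv in Hk *.
      have Hk' : (m <= k < x)%N by move: Hk Hyv; lia.
      move=> /(_ Hk') /orP[/eqP E|//]; move: Hk; lia.
    * case: Hm1 => [->|H]; [by left|right]; move: H; rewrite /= inE negb_or => /andP[_ //].
  + have Hmx' : m = x by move: Hm Hmx; lia.
    have Hy1 : (y.+1 < x)%N.
      case: Hm1 => [Hm0|H]; first by move: Hm0 Hmx' Hyx Hxy; lia.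
      move: H; rewrite /= inE negb_or => /andP[H _].
      by move: H Hmx' Hyx Hxy; lia.
    rewrite sref_fix; [|by move: Hy1; lia|by move: Hy1; lia].
    rewrite Pfix; first by rewrite Hmx'.
    by move=> z /Hlt; move: Hy1; lia.
Qed.


Notation LX X := (sort geqo (enum X)).

Lemma hXE (X : {set 'I_N}) : hX X = Pl (LX X). Proof. by []. Qed.

Lemma DX (X : {set 'I_N}) : Dl (LX X).
Proof.
rewrite /Dl sort_uniq enum_uniq sort_sorted //.
Qed.

Lemma memXz (X : {set 'I_N}) (z : 'I_N) : ((z : nat) \in mv (LX X)) = (z \in X).
Proof. by rewrite mem_map; [rewrite mem_sort mem_enum | exact: ord_inj]. Qed.

Lemma memXbig (X : {set 'I_N}) (k : nat) : (N <= k)%N -> k \notin mv (LX X).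
Proof. by move=> H; apply/mapP => [[z _ E]]; move: E H (ltn_ord z); lia. Qed.

Lemma notin_mv (X : {set 'I_N}) (k : nat) : (forall z : 'I_N, (z : nat) = k -> z \notin X) ->
  k \notin mv (LX X).
Proof.
move=> H; case: (ltnP k N) => Hk; last exact: memXbig.
by rewrite -[k]/(nat_of_ord (Ordinal Hk)) memXz; apply: H.
Qed.

Lemma in_mv (X : {set 'I_N}) (k : nat) (z : 'I_N) : (z : nat) = k -> z \in X -> k \in mv (LX X).
Proof. by move=> <-; rewrite memXz. Qed.

Lemma hX_in (X : {set 'I_N}) (x : 'I_N.+1) (z : 'I_N) : (x : nat) = z -> z \in X ->
  (hX X x : nat) = x.+1.
Proof. by move=> E Hz; rewrite hXE; apply: P_in; [exact: DX | apply: in_mv Hz]. Qed.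

Lemma hX_notin (X : {set 'I_N}) (x : 'I_N.+1) : (forall z : 'I_N, (x : nat) = z -> z \notin X) ->
  (hX X x <= x)%N.
Proof.
move=> H; rewrite hXE; apply: P_notin; first exact: DX.
by apply: notin_mv => z E; apply: H.
Qed.

Lemma hX_run (X : {set 'I_N}) (x : 'I_N.+1) m : (forall z : 'I_N, (x : nat) = z -> z \notin X) ->
  (m <= x)%N -> (forall z : 'I_N, (m <= z < x)%N -> z \in X) ->
  (m = 0 \/ forall z : 'I_N, (z : nat) = m.-1 -> z \notin X) ->
  (hX X x : nat) = m.
Proof.
move=> Hx Hm Hr Hm1; rewrite hXE; apply: P_run => //; first exact: DX.
- by apply: notin_mv => z E; apply: Hx.
- move=> k Hk; have Hk' : (k < N)%N by move: Hk (ltn_ord x); lia.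
  by apply: (in_mv (z := Ordinal Hk')) => //; apply: Hr.
- by case: Hm1 => [->|H]; [left|right; apply: notin_mv].
Qed.

Lemma sab_ne (v : W) k : nat_of_ord (v (sa k)) != nat_of_ord (v (sb k)).
Proof.
change (val (v (sa k)) != val (v (sb k))); rewrite val_eqE.
apply/eqP => /perm_inj/(congr1 val). rewrite /= /bump leq0n add1n. lia.
Qed.

Lemma wlong_char (K : {set 'I_N}) a b : (b <= N)%N ->
  (forall k : 'I_N, (a <= k < b)%N -> k \in K) ->
  (forall k : 'I_N, k \in K -> (a <= k < b)%N) ->
  forall x : 'I_N.+1, (wlong K x : nat) = if (a <= x <= b)%N then a + b - x else x.
Proof.
move=> HbN HK1 HK2.
set w := wlong K.
have [Hw Hmax] : w \in parab K /\ forall v, v \in parab K -> (len v <= len w)%N.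
  rewrite /w /wlong; case: arg_maxnP => [|v Hv Hm]; [exact: group1 | by split].
have Hfix : forall v, v \in parab K -> forall x : 'I_N.+1, ~~ (a <= x <= b)%N -> v x = x.
  move=> v /gen_prodgP [n [c Hc ->]] x Hx.
  apply: (big_ind (fun u : W => u x = x)) => //.
  - by rewrite perm1.
  - by move=> u1 u2 H1 H2; rewrite permM H1 H2.
  - move=> i _; have /imsetP [k Hk ->] := Hc i.
    have := HK2 k Hk => Hk'.
    by apply: sref_fix; move: Hx Hk' HbN; lia.
have HsK : forall k, k \in K -> sref k \in parab K.
  by move=> k Hk; apply: mem_gen; apply/imsetP; exists k.
have Hdesc : forall k : 'I_N, (a <= k < b)%N -> (w^-1 (sb k) < w^-1 (sa k))%N.
  move=> k Hk.
  case: (boolP (w^-1 (sa k) < w^-1 (sb k))%N) => H.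
  - exfalso; have := Hmax (w * sref k) (groupM Hw (HsK k (HK1 k Hk))).
    by rewrite len_ws H; lia.
  - by move: H (sab_ne (w^-1) k); lia.
have Hrange : forall v, v \in parab K -> forall x : 'I_N.+1,
    (a <= x <= b)%N -> (a <= v x <= b)%N.
  move=> v Hv x Hx; apply/negPn/negP => Hvx.
  have := Hfix v Hv (v x) Hvx => /perm_inj E.
  by move: Hvx; rewrite E Hx.
have Hf : w^-1 \in parab K by rewrite groupV.
pose g i := nat_of_ord (w^-1 (inord i)).
have Hg : forall i, (a <= i <= b)%N -> g i = a + b - i.
  apply: dec_nat.
  - move=> i Hi; rewrite /g; apply: Hrange => //.
    by rewrite inordK; move: Hi HbN; lia.
  - move=> i Hi; have Hi' : (i < N)%N by move: Hi HbN; lia.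
    have := Hdesc (Ordinal Hi') Hi; rewrite /g.
    have -> : sa (Ordinal Hi') = inord i by apply: val_inj; rewrite /= inordK //; lia.
    have -> : sb (Ordinal Hi') = inord i.+1.
      by apply: val_inj; rewrite /= inordK /bump /=; lia.
    by [].
move=> x; case: ifP => Hx; last by rewrite Hfix // Hx.
have Hy := Hrange w Hw x Hx.
have := Hg (w x) Hy; rewrite /g inord_val permK.
by move: Hy Hx; lia.
Qed.


Notation wI := (wlong (Iset N)).
Notation wJ := (wlong (Jset N)).
Notation wT := (wlong (Tset N)).
Notation hT := (hX (Tset N)).
Notation hJ := (hX (Jset N)).
Notation hI := (hX (Iset N)).

Lemma wI_E (x : 'I_N.+1) : (wI x : nat) = if (x <= N.-1)%N then N.-1 - x else x.
Proof.
rewrite (@wlong_char _ 0 N.-1) //=; first by lia.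
- by move=> k Hk; rewrite inE; lia.
- by move=> k; rewrite inE; lia.
Qed.

Lemma wJ_E (x : 'I_N.+1) : (wJ x : nat) = if (1 <= x)%N then N.+1 - x else x.
Proof.
rewrite (@wlong_char _ 1 N) //=.
- by have := ltn_ord x; case: ifP; case: ifP => //; lia.
- by move=> k Hk; rewrite inE; lia.
- by move=> k; rewrite inE; have := ltn_ord k; lia.
Qed.

Lemma wT_E (x : 'I_N.+1) : (wT x : nat) = N - x.
Proof.
rewrite (@wlong_char _ 0 N) //=.
all: try by move=> k Hk; rewrite inE.
all: try by move=> k; have := ltn_ord k; lia.
by have := ltn_ord x; case: ifP; lia.
Qed.

Lemma hT_E (x : 'I_N.+1) : (hT x : nat) = if (x < N)%N then x.+1 else 0.
Proof.
case: ifP => Hx.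
- by apply: (@hX_in _ x (Ordinal Hx)) => //; rewrite inE.
- apply: hX_run.
  + by move=> z E; move: (ltn_ord z) Hx; lia.
  + by [].
  + by move=> z _; rewrite inE.
  + by left.
Qed.

Lemma hJ_E (x : 'I_N.+1) :
  (hJ x : nat) = (if (x : nat) == 0 then 0 else if (x < N) then x.+1 else 1)%N.
Proof.
case: ifP => Hx0.
- have := @hX_notin _ x; move/eqP: Hx0 => ->.
  by move=> H; apply/eqP; rewrite -leqn0; apply: H => z E; rewrite inE -E.
case: ifP => Hx.
- by apply: (@hX_in _ x (Ordinal Hx)) => //; rewrite inE /=; lia.
- apply: hX_run.
  + by move=> z E; move: (ltn_ord z) Hx; lia.
  + by lia.
  + by move=> z Hz; rewrite inE; lia.
  + by right => z E; rewrite inE E.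
Qed.

Lemma hI_E (x : 'I_N.+1) :
  (hI x : nat) = (if (x.+1 < N) then x.+1 else if (x : nat) == N.-1 then 0 else x)%N.
Proof.
have HxN := ltn_ord x.
case: ifP => Hx.
- have Hx' : (x < N)%N by lia.
  by apply: (@hX_in _ x (Ordinal Hx')) => //; rewrite inE /=.
have Hnot : forall z : 'I_N, (x : nat) = z -> z \notin Iset N.
  by move=> z E; rewrite inE -E Hx.
case: ifP => Hx1.
- apply: hX_run.
  + exact: Hnot.
  + by [].
  + by move=> z Hz; rewrite inE; move/eqP: Hx1 Hz; lia.
  + by left.
- apply: hX_run.
  + exact: Hnot.
  + by [].
  + by move=> z Hz; lia.
  + by right => z E; rewrite inE E; lia.
Qed.


Lemma sref_injk : injective sref.
Proof.
move=> k k' E.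
have := congr1 (fun p : W => nat_of_ord (p (sa k))) E => /=.
rewrite !srefN /= eqxx.
move=> H; apply: ord_inj; move: H.
case: ifP => [/eqP -> //|_]; case: ifP => [/eqP|_]; lia.
Qed.

Lemma srefJ (x : 'I_N) : sref x ^ wT = sref (rev_ord x).
Proof.
have Hb : forall i, bump 0 i = i.+1 by move=> i; rewrite /bump leq0n add1n.
rewrite /Defs.sref tpermJ tpermC; congr tperm; apply: ord_inj; rewrite wT_E /= Hb;
  by have := ltn_ord x; lia.
Qed.

Lemma conjT_mem (X : {set 'I_N}) k : (k \in conjT X) = (rev_ord k \in X).
Proof.
rewrite inE; apply/existsP/idP.
- move=> [x /andP[Hx /eqP E]]; move: E; rewrite srefJ => /sref_injk ->.
  by rewrite rev_ordK.
- by move=> H; exists (rev_ord k); rewrite H srefJ rev_ordK eqxx.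
Qed.

Lemma hX_memE (X : {set 'I_N}) z : (z \in X) = ((hX X (sa z) : nat) == z.+1).
Proof.
case: (boolP (z \in X)) => H.
- by rewrite (hX_in (z := z)) ?eqxx.
- have := @hX_notin X (sa z).
  have : forall z' : 'I_N, (sa z : nat) = z' -> z' \notin X.
    by move=> z' E; have -> : z' = z by apply: ord_inj; rewrite -E.
  move=> H1 /(_ H1) H2; apply/esym/negbTE; move: H2; rewrite /=; lia.
Qed.

Lemma hX_inj (X1 X2 : {set 'I_N}) : hX X1 = hX X2 -> X1 = X2.
Proof. by move=> E; apply/setP => z; rewrite !hX_memE E. Qed.

Lemma invE (v : W) x y : v y = x -> v^-1 x = y.
Proof. by move=> <-; rewrite permK. Qed.

Lemma rdes_pts (w : W) k p q : w p = sa k -> w q = sb k -> (k \in rdes w) = (q < p)%N.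
Proof. by move=> Hp Hq; rewrite rdesE (invE Hp) (invE Hq). Qed.

Lemma len_sw k (w : W) : len (sref k * w) =
  if (w (sa k) < w (sb k))%N then (len w).+1 else (len w).-1.
Proof. by rewrite !lenE inv_sw. Qed.


Ltac split_ifs := repeat match goal with
 | |- context [if ?c then _ else _] =>
     lazymatch c with context [if _ then _ else _] => fail | _ => let H := fresh "Hif" in case H: c => /= end
 end.

Lemma uT : wI * hT = wT.
Proof.
apply/permP => x; apply: ord_inj; rewrite permM hT_E wI_E wT_E.
by have := ltn_ord x; split_ifs; lia.
Qed.

Lemma hTwJ : hT * wJ = wT.
Proof.
apply/permP => x; apply: ord_inj; rewrite permM wJ_E hT_E wT_E.
by have := ltn_ord x; split_ifs; lia.
Qed.


Lemma len_wT : len wT = (len wI + len hT)%N.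
Proof.
rewrite !lenE /inv.
set A := [set p : 'I_N.+1 * 'I_N.+1 | (p.2 : nat) == N].
have E1 : Inv hT = Inv wT :&: A.
  apply/setP => [[i j]]; rewrite !inE /= !hT_E !wT_E.
  by apply/idP/idP; have := ltn_ord i; have := ltn_ord j; split_ifs; lia.
have E2 : Inv wI = Inv wT :\: A.
  apply/setP => [[i j]]; rewrite !inE /= !wI_E !wT_E.
  by apply/idP/idP; have := ltn_ord i; have := ltn_ord j; split_ifs; lia.
by rewrite E1 E2 addnC cardsID.
Qed.


Lemma saN k : (sa k : nat) = k. Proof. by []. Qed.
Lemma sbN k : (sb k : nat) = k.+1.
Proof. by rewrite /= /bump leq0n add1n. Qed.

Lemma ldes_wT : ldes wT = Tset N.
Proof.
apply/setP => k; rewrite ldesE !wT_E saN sbN !inE.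
by have := ltn_ord k; lia.
Qed.

Lemma rdes_wT : rdes wT = Tset N.
Proof.
apply/setP => k; have Hk := ltn_ord k.
rewrite (@rdes_pts _ k (inord (N - k)) (inord (N - k.+1))).
all: try by apply: ord_inj; rewrite wT_E inordK ?saN ?sbN; lia.
by rewrite !inordK ?inE; lia.
Qed.

Section Jcase.
Hypothesis HN : (0 < N)%N.
Let HN1 : (N.-1 < N)%N. Proof. by lia. Qed.
Let k0 : 'I_N := Ordinal HN.
Let kN : 'I_N := Ordinal HN1.

Lemma uJ_E x : nat_of_ord ((wI * hJ)%g x) =
  (if x.+1 < N then N - x else if (x : nat) == N.-1 then 0 else 1)%N.
Proof. by rewrite permM hJ_E wI_E; have := ltn_ord x; split_ifs; lia. Qed.

Lemma hTJ : hT = hJ * sref k0.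
Proof.
apply/permP => x; apply: ord_inj; rewrite permM srefN hJ_E hT_E /=.
by have := ltn_ord x; split_ifs; lia.
Qed.

Lemma wT_uJ : wT = sref kN * (wI * hJ).
Proof.
apply/permP => x; apply: ord_inj; rewrite [in RHS]permM uJ_E srefN wT_E /=.
by have := ltn_ord x; split_ifs; lia.
Qed.

Lemma len_uJ : len (wI * hJ) = (len wI + len hJ)%N.
Proof.
have H1 := len_wT.
have Ea : hJ (sa k0) = sa k0 by apply: ord_inj; rewrite hJ_E saN /=.
have Eb : hJ ord_max = sb k0.
  by apply: ord_inj; rewrite hJ_E sbN /=; split_ifs; lia.
rewrite hTJ len_ws (invE Ea) (invE Eb) /= in H1.
have HN' : (0 < N)%N := HN.
rewrite HN' in H1.
rewrite wT_uJ len_sw !uJ_E saN sbN /= in H1.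
move: H1; split_ifs; lia.
Qed.

Lemma uJ_hI : wI * hJ = hI * wJ.
Proof.
apply/permP => x; apply: ord_inj; rewrite uJ_E permM wJ_E hI_E.
by have := ltn_ord x; split_ifs; lia.
Qed.

Lemma ldes_uJ : ldes (wI * hJ) = Iset N.
Proof.
apply/setP => k; rewrite ldesE !uJ_E saN sbN !inE.
by apply/idP/idP; have := ltn_ord k; split_ifs; lia.
Qed.

Definition pre (y : nat) := (if y == 0 then N.-1 else if y == 1 then N else N - y)%N.

Lemma uJ_pre (y : 'I_N.+1) : (wI * hJ) (inord (pre y)) = y.
Proof.
have Hy := ltn_ord y.
have Hp : (pre y <= N)%N by rewrite /pre; split_ifs; lia.
apply: ord_inj; rewrite uJ_E inordK //; rewrite /pre; split_ifs; lia.
Qed.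

Lemma rdes_uJ : rdes (wI * hJ) = Jset N.
Proof.
apply/setP => k; have Hk := ltn_ord k.
rewrite (@rdes_pts _ k (inord (pre (sa k))) (inord (pre (sb k)))) ?uJ_pre //.
have Hb : forall i, bump 0 i = i.+1 by move=> i; rewrite /bump leq0n add1n.
rewrite !inordK; try by rewrite /pre; split_ifs; lia.
rewrite inE /pre /= ?Hb.
by apply/idP/idP; split_ifs; lia.
Qed.

End Jcase.

Lemma ii_i (X : {set 'I_N}) : Jset N \subset rdes (wI * hX X) -> Jset N \subset X.
Proof.
move=> H; apply/subsetP => j0 Hj0; apply/negPn/negP => Hnj0.
pose P := fun j : 'I_N => (j \in Jset N) && (j \notin X).
have HP0 : P j0 by rewrite /P Hj0 Hnj0.
case: (@arg_maxnP _ j0 P (fun j : 'I_N => nat_of_ord j) HP0) => j /andP[Hj HjX] Hmax.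
have HN : (0 < N)%N by have := ltn_ord j; lia.
have Hj' : (0 < j)%N by move: Hj; rewrite inE.
have Hh : hX X ord_max = sb j.
  apply: ord_inj; rewrite sbN; apply: hX_run.
  - by move=> z E; have := ltn_ord z; rewrite /= in E; lia.
  - by have := ltn_ord j; rewrite /=; lia.
  - move=> z Hz; apply/negPn/negP => Hzn.
    have := Hmax z; rewrite /P inE Hzn andbT.
    by move: Hz Hj'; lia.
  - by right => z E; have -> : z = j by apply: ord_inj.
have Hu : (wI * hX X) ord_max = sb j.
  rewrite permM.
  have -> : wI ord_max = ord_max by apply: ord_inj; rewrite wI_E /=; split_ifs; lia.
  exact: Hh.
have := subsetP H j Hj; rewrite rdesE (invE Hu) /=.
by have := ltn_ord ((wI * hX X)^-1 (sa j)); lia.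
Qed.

End Aux.

Unset Implicit Arguments.

Theorem lemma10p5 (N : nat) (X : {set 'I_N}) :
  (Jset N \subset X <-> Jset N \subset rdes (wlong (Iset N) * hX X))
  /\ (Jset N \subset X ->
      [/\ len (wlong (Iset N) * hX X) = (len (wlong (Iset N)) + len (hX X))%N,
          exists Y : {set 'I_N},
            [/\ wlong (Iset N) * hX X = hX Y * wlong (Jset N),
                (forall Y' : {set 'I_N},
                   wlong (Iset N) * hX X = hX Y' * wlong (Jset N) -> Y' = Y),
                Y = conjT X
              & ldes (hX Y * wlong (Jset N)) = Y]
        & rdes (wlong (Iset N) * hX X) = X]).
Proof.
have Hmore : Jset N \subset X ->
      [/\ len (wlong (Iset N) * hX X) = (len (wlong (Iset N)) + len (hX X))%N,
          exists Y : {set 'I_N},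
            [/\ wlong (Iset N) * hX X = hX Y * wlong (Jset N),
                (forall Y' : {set 'I_N},
                   wlong (Iset N) * hX X = hX Y' * wlong (Jset N) -> Y' = Y),
                Y = conjT X
              & ldes (hX Y * wlong (Jset N)) = Y]
        & rdes (wlong (Iset N) * hX X) = X].
  move=> HJ.
  have [->|[-> HN]] : X = Tset N \/ (X = Jset N /\ (0 < N)%N).
    case: (boolP (Tset N \subset X)) => HT.
      by left; apply/eqP; rewrite eqEsubset subsetT HT.
    right; move/subsetPn: HT => [k _ Hk].
    have Hk0 : (k : nat) = 0.
      apply/eqP; rewrite -leqn0 leqNgt; apply/negP => Hk0.
      by move: Hk; rewrite (subsetP HJ) // inE.
    split; last by have := ltn_ord k; lia.
    apply/setP => z; rewrite [in RHS]inE; apply/idP/idP => [Hz|Hz]; last first.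
      by apply: (subsetP HJ); rewrite inE.
    apply/negPn/negP; rewrite -leqNgt leqn0 => /eqP Hz0.
    have Ekz : k = z by apply: ord_inj; rewrite Hz0 Hk0.
    by move: Hk; rewrite Ekz Hz.
  - split.
    + by rewrite uT len_wT.
    + exists (Tset N); split.
      * by rewrite uT hTwJ.
      * by move=> Y' E; apply: hX_inj; apply: (mulIg (wlong (Jset N))); rewrite -E uT hTwJ.
      * by apply/setP => k; rewrite conjT_mem !inE.
      * by rewrite hTwJ ldes_wT.
    + by rewrite uT rdes_wT.
  - split.
    + exact: len_uJ.
    + exists (Iset N); split.
      * exact: uJ_hI.
      * by move=> Y' E; apply: hX_inj; apply: (mulIg (wlong (Jset N))); rewrite -E uJ_hI.
      * by apply/setP => k; rewrite conjT_mem !inE /=; apply/idP/idP; have := ltn_ord k; lia.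
      * by rewrite -uJ_hI // ldes_uJ.
    + exact: rdes_uJ.
split; last exact: Hmore.
split => [HJ|]; last exact: ii_i.
by case: (Hmore HJ) => _ _ ->.
Qed.
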